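(* Let $G$ be a countably infinite graph. If $G$ has pairwise disjoint ruling sets $F_n$ ($n\in\mathbb{N}$) satisfying $|F_n|\le\log_2 n$ for all sufficiently large $n$, then $G$ is not Ramsey-dense; that is, there is a 2-coloring of the edges of $K_\mathbb{N}$ in which every monochromatic copy of $G$ has upper density $0$.
   Context: A set $X\subseteq V(G)$ is ruling if $X$ is finite and all but finitely many vertices of $V(G)\setminus X$ have a neighbor in $X$. $K_{\mathbb{N}}$ is the complete graph on $\mathbb{N}$; a copy of $G$ is a subgraph isomorphic to $G$, monochromatic if all its edges have the same color. $\overline{d}(V)=\limsup_{t\to\infty}|V\cap\{1,\dots,t\}|/t$; $G$ is Ramsey-dense if every 2-coloring of $K_\mathbb{N}$ has a monochromatic copy of $G$ with positive upper density. *)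

(* Defs.v *)
From Stdlib Require Import Reals List ClassicalDescription.
From Coquelicot Require Import Coquelicot.
Import ListNotations.
Open Scope R_scope.

Definition simple_graph {V : Type} (adj : V -> V -> Prop) : Prop :=
  (forall u v, adj u v -> adj v u) /\ (forall v, ~ adj v v).

Definition countably_infinite (V : Type) : Prop :=
  exists e : nat -> V, (forall x y, e x = e y -> x = y) /\ (forall v, exists n, e n = v).

(* A finite set X (given as a duplicate-free list) is ruling if all but finitely
   many vertices outside X have a neighbour in X. *)
Definition ruling {V : Type} (adj : V -> V -> Prop) (X : list V) : Prop :=
  NoDup X /\
  exists L : list V, forall v, ~ In v X -> ~ (exists w, In w X /\ adj v w) -> In v L.

Definition count_upto (S : nat -> Prop) (t : nat) : nat :=
  fold_right Nat.add 0%nat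
    (map (fun n => if excluded_middle_informative (S n) then 1%nat else 0%nat) (seq 1 t)).

Definition upper_density (S : nat -> Prop) : Rbar :=
  LimSup_seq (fun t => INR (count_upto S t) / INR t).

(* colour of the edge {m,n} of K_N under c (only c m n with m < n matters) *)
Definition edge_color (c : nat -> nat -> bool) (m n : nat) : bool :=
  if Nat.ltb m n then c m n else c n m.

(* f : V -> nat injective with adj u v -> f u f v an edge: a copy of G in K_N
   (with vertex set the image of f); monochromatic in colour b. *)
Definition mono_copy {V : Type} (adj : V -> V -> Prop) (c : nat -> nat -> bool)
  (f : V -> nat) : Prop :=
  (forall u v, f u = f v -> u = v) /\
  exists b : bool, forall u v, adj u v -> edge_color c (f u) (f v) = b.

Definition image {V : Type} (f : V -> nat) : nat -> Prop := fun n => exists v, f v = n.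

Definition ramsey_dense {V : Type} (adj : V -> V -> Prop) : Prop :=
  forall c : nat -> nat -> bool,
    exists f : V -> nat, mono_copy adj c f /\ Rbar_lt (Finite 0) (upper_density (image f)).

(* Main.v *)
Require Import Defs.
From Stdlib Require Import Reals List.
From Coquelicot Require Import Coquelicot.
From Stdlib Require Import Arith Lia Lra Bool Classical ClassicalDescription.
Import ListNotations.
Local Open Scope nat_scope.

Definition bit (i x : nat) : bool := Nat.odd (x / 2 ^ i).

Lemma pow2_pos p : 0 < 2 ^ p.
Proof. apply Nat.neq_0_lt_0, Nat.pow_nonzero; lia. Qed.

Lemma bit_per s P q y : s < P -> bit s (q * 2 ^ P + y) = bit s y.
Proof.
  intros H. unfold bit.
  replace (2 ^ P) with (2 * 2 ^ (P - s - 1) * 2 ^ s).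
  2:{ rewrite <- Nat.pow_succ_r', <- Nat.pow_add_r. f_equal. lia. }
  rewrite Nat.mul_assoc, Nat.div_add_l by (apply Nat.pow_nonzero; lia).
  rewrite Nat.add_comm. replace (q * (2 * 2 ^ (P - s - 1))) with (2 * (q * 2 ^ (P - s - 1))) by ring.
  apply Nat.odd_add_mul_2.
Qed.

Lemma bit_top P q y : y < 2 ^ P -> bit P (q * 2 ^ P + y) = Nat.odd q.
Proof.
  intros H. unfold bit. rewrite Nat.div_add_l by (apply Nat.pow_nonzero; lia).
  rewrite Nat.div_small by lia. now rewrite Nat.add_0_r.
Qed.

Definition cntF (a n : nat) (p : nat -> bool) : nat := length (filter p (seq a n)).

Lemma cntF_shift n : forall a p, cntF a n p = cntF 0 n (fun y => p (a + y)).
Proof.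
  induction n as [|n IH]; intros a p; auto.
  unfold cntF in *. simpl.
  rewrite Nat.add_0_r.
  assert (E : length (filter p (seq (S a) n)) = length (filter (fun y => p (a + y)) (seq 1 n))).
  { rewrite (IH (S a)), (IH 1). f_equal. apply filter_ext. intros; f_equal; lia. }
  destruct (p a); simpl; auto.
Qed.

Lemma cntF_app a n m p : cntF a (n + m) p = cntF a n p + cntF (a + n) m p.
Proof. unfold cntF. now rewrite seq_app, filter_app, length_app. Qed.

Lemma cntF_ext a n p q : (forall x, a <= x < a + n -> p x = q x) -> cntF a n p = cntF a n q.
Proof.
  intros H. unfold cntF. f_equal. induction n as [|n IH]; auto.
  rewrite seq_S, !filter_app, IH by (intros; apply H; lia). simpl.
  rewrite H by lia. auto.
Qed.

Lemma forallb_ext_in {A} (f g : A -> bool) l : (forall x, In x l -> f x = g x) -> forallb f l = forallb g l.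
Proof. induction l; simpl; intros H; auto. rewrite H, IHl; auto. Qed.

Lemma existsb_ext_in {A} (f g : A -> bool) l : (forall x, In x l -> f x = g x) -> existsb f l = existsb g l.
Proof. induction l; simpl; intros H; auto. rewrite H, IHl; auto. Qed.

Definition prodl (l : list nat) : nat := fold_right Nat.mul 1 l.

Lemma prodl_app l1 l2 : prodl (l1 ++ l2) = prodl l1 * prodl l2.
Proof. induction l1 as [|x l1 IH]; simpl; [lia|]. rewrite IH. ring. Qed.


Definition kk (blk : nat -> nat) P j := length (filter (fun s => Nat.eqb (blk s) j) (seq 0 P)).

Definition pr (blk : nat -> nat) (b : bool) P Js x :=
  forallb (fun j => existsb (fun s => Nat.eqb (blk s) j && Bool.eqb (bit s x) b) (seq 0 P)) Js.

Lemma kk_S blk P j : kk blk (S P) j = kk blk P j + (if Nat.eqb (blk P) j then 1 else 0).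
Proof. unfold kk. rewrite seq_S, filter_app, length_app. simpl. destruct (blk P =? j); auto. Qed.

Definition Ex (blk : nat -> nat) (b : bool) P j y := existsb (fun s => Nat.eqb (blk s) j && Bool.eqb (bit s y) b) (seq 0 P).

Lemma pr_S blk b P Js q y : y < 2 ^ P ->
  pr blk b (S P) Js (q * 2 ^ P + y) =
  forallb (fun j => Ex blk b P j y || (Nat.eqb (blk P) j && Bool.eqb (Nat.odd q) b)) Js.
Proof.
  intros Hy. unfold pr, Ex. apply forallb_ext_in. intros j _.
  rewrite seq_S, existsb_app. simpl. rewrite bit_top by auto. rewrite orb_false_r.
  f_equal. apply existsb_ext_in. intros s Hs. apply in_seq in Hs.
  rewrite bit_per by lia. auto.
Qed.

Lemma count_formula blk b P : forall Js, NoDup Js ->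
  cntF 0 (2 ^ P) (pr blk b P Js) * prodl (map (fun j => 2 ^ kk blk P j) Js)
  = 2 ^ P * prodl (map (fun j => 2 ^ kk blk P j - 1) Js).
Proof.
  induction P as [|P IH]; intros Js HJ.
  - destruct Js as [|j Js]; simpl; auto.
  - assert (Hsplit : forall p, cntF 0 (2 ^ S P) p =
       cntF 0 (2 ^ P) (fun y => p (0 * 2 ^ P + y)) + cntF 0 (2 ^ P) (fun y => p (1 * 2 ^ P + y))).
    { intros p. replace (2 ^ S P) with (2 ^ P + 2 ^ P) by (rewrite Nat.pow_succ_r'; lia). rewrite cntF_app. simpl (0 + _).
      rewrite (cntF_shift _ (0 + 2 ^ P)). f_equal.
      all: apply cntF_ext; intros; f_equal; lia.
      all: apply cntF_ext; intros; f_equal; lia. }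
    rewrite Hsplit.
    rewrite (cntF_ext 0 _ (fun y => pr blk b (S P) Js (0 * 2 ^ P + y))
       (fun y => forallb (fun j => Ex blk b P j y || (Nat.eqb (blk P) j && Bool.eqb (Nat.odd 0) b)) Js))
      by (intros; apply pr_S; lia).
    rewrite (cntF_ext 0 _ (fun y => pr blk b (S P) Js (1 * 2 ^ P + y))
       (fun y => forallb (fun j => Ex blk b P j y || (Nat.eqb (blk P) j && Bool.eqb (Nat.odd 1) b)) Js))
      by (intros; apply pr_S; lia).
    assert (Hfalse : forall y, forallb (fun j => Ex blk b P j y || (Nat.eqb (blk P) j && false)) Js = pr blk b P Js y).
    { intros y. unfold pr, Ex. apply forallb_ext_in. intros; rewrite andb_false_r, orb_false_r; auto. }
    destruct (in_dec Nat.eq_dec (blk P) Js) as [Hin | Hnin].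
    + apply in_split in Hin. destruct Hin as (l1 & l2 & ->).
      apply NoDup_remove in HJ as HJ'. destruct HJ' as [HJ' Hn].
      assert (Htrue : forall y, forallb (fun j => Ex blk b P j y || (Nat.eqb (blk P) j && true)) (l1 ++ blk P :: l2)
                          = pr blk b P (l1 ++ l2) y).
      { intros y. unfold pr, Ex. rewrite !forallb_app. simpl. rewrite Nat.eqb_refl, andb_true_r, orb_true_r.
        simpl. rewrite forallb_ext_in with (g := fun j => existsb (fun s => Nat.eqb (blk s) j && Bool.eqb (bit s y) b) (seq 0 P)).
        2:{ intros x Hx. rewrite andb_true_r. destruct (Nat.eqb_spec (blk P) x); subst.
            - exfalso; apply Hn; apply in_or_app; auto.
            - apply orb_false_r. }
        f_equal.
        apply forallb_ext_in. intros x Hx. rewrite andb_true_r. destruct (Nat.eqb_spec (blk P) x); subst.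
        - exfalso; apply Hn; apply in_or_app; auto.
        - apply orb_false_r. }
      assert (Hc : cntF 0 (2 ^ P) (fun y => forallb (fun j => Ex blk b P j y || (Nat.eqb (blk P) j && Bool.eqb (Nat.odd 0) b)) (l1 ++ blk P :: l2))
                 + cntF 0 (2 ^ P) (fun y => forallb (fun j => Ex blk b P j y || (Nat.eqb (blk P) j && Bool.eqb (Nat.odd 1) b)) (l1 ++ blk P :: l2))
                 = cntF 0 (2 ^ P) (pr blk b P (l1 ++ l2)) + cntF 0 (2 ^ P) (pr blk b P (l1 ++ blk P :: l2))).
      { unfold cntF. destruct b; simpl.
        - rewrite Nat.add_comm. f_equal; f_equal; apply filter_ext; intros; auto.
        - f_equal; f_equal; apply filter_ext; intros; auto. }
      rewrite Hc. clear Hc Htrue Hfalse Hsplit.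
      pose proof (IH _ HJ') as I1. pose proof (IH _ HJ) as I2.
      rewrite !map_app, !prodl_app in *. simpl in *.
      assert (Ek : forall l, (forall x, In x l -> x <> blk P) -> forall (h : nat -> nat),
                 prodl (map (fun j => h (kk blk (S P) j)) l) = prodl (map (fun j => h (kk blk P j)) l)).
      { intros l Hl h. f_equal. apply map_ext_in. intros x Hx. rewrite kk_S.
        destruct (Nat.eqb_spec (blk P) x); [exfalso; apply (Hl x); auto | ]. now rewrite Nat.add_0_r. }
      assert (H1 : forall x, In x l1 -> x <> blk P) by (intros x Hx ->; apply Hn; apply in_or_app; auto).
      assert (H2 : forall x, In x l2 -> x <> blk P) by (intros x Hx ->; apply Hn; apply in_or_app; auto).
      rewrite (Ek l1 H1 (fun k => 2 ^ k)), (Ek l2 H2 (fun k => 2 ^ k)),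
              (Ek l1 H1 (fun k => 2 ^ k - 1)), (Ek l2 H2 (fun k => 2 ^ k - 1)).
      rewrite kk_S, Nat.eqb_refl.
      set (c1 := cntF 0 (2 ^ P) (pr blk b P (l1 ++ l2))) in *.
      set (c2 := cntF 0 (2 ^ P) (pr blk b P (l1 ++ blk P :: l2))) in *.
      set (A1 := prodl (map (fun j => 2 ^ kk blk P j) l1)) in *.
      set (A2 := prodl (map (fun j => 2 ^ kk blk P j) l2)) in *.
      set (B1 := prodl (map (fun j => 2 ^ kk blk P j - 1) l1)) in *.
      set (B2 := prodl (map (fun j => 2 ^ kk blk P j - 1) l2)) in *.
      rewrite Nat.pow_add_r, !Nat.pow_succ_r'. simpl (2 ^ 1).
      set (u := 2 ^ kk blk P (blk P)) in *. set (Q := 2 ^ P) in *.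
      assert (Hu : 1 <= u) by apply pow2_pos.
      destruct u as [|v]; [lia|]. replace (S v - 1) with v in * by lia.
      replace (S v * 2 - 1) with (2 * v + 1) by lia.
      simpl (2 ^ 0). replace (S v * (2 * 1) - 1) with (2 * v + 1) by lia.
      transitivity (2 * S v * (c1 * (A1 * A2)) + 2 * (c2 * (A1 * (S v * A2)))); [ring|].
      rewrite I1, I2. ring.
    + assert (Htrue : forall y, forallb (fun j => Ex blk b P j y || (Nat.eqb (blk P) j && true)) Js = pr blk b P Js y).
      { intros y. unfold pr, Ex. apply forallb_ext_in. intros x Hx. rewrite andb_true_r.
        destruct (Nat.eqb_spec (blk P) x); subst; [contradiction|]. apply orb_false_r. }
      assert (Hc : forall bb, cntF 0 (2 ^ P) (fun y => forallb (fun j => Ex blk b P j y || (Nat.eqb (blk P) j && bb)) Js)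
                 = cntF 0 (2 ^ P) (pr blk b P Js)).
      { intros []; unfold cntF; f_equal; apply filter_ext; auto. }
      rewrite !Hc.
      assert (Ek : forall (h : nat -> nat),
                 prodl (map (fun j => h (kk blk (S P) j)) Js) = prodl (map (fun j => h (kk blk P j)) Js)).
      { intros h. f_equal. apply map_ext_in. intros x Hx. rewrite kk_S.
        destruct (Nat.eqb_spec (blk P) x); [subst; contradiction | ]. now rewrite Nat.add_0_r. }
      rewrite (Ek (fun k => 2 ^ k)), (Ek (fun k => 2 ^ k - 1)).
      rewrite Nat.pow_succ_r'. specialize (IH _ HJ). nia.
Qed.


Lemma cntF_periodic P p : (forall q y, y < 2 ^ P -> p (q * 2 ^ P + y) = p y) ->
  forall q, cntF 0 (q * 2 ^ P) p = q * cntF 0 (2 ^ P) p.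
Proof.
  intros Hp q. induction q as [|q IH]; auto.
  replace (S q * 2 ^ P) with (q * 2 ^ P + 2 ^ P) by lia.
  rewrite cntF_app, IH.
  assert (E : cntF (0 + q * 2 ^ P) (2 ^ P) p = cntF 0 (2 ^ P) p).
  { rewrite cntF_shift. apply cntF_ext. intros x Hx. simpl. apply Hp. lia. }
  rewrite E. lia.
Qed.

Lemma cntF_mono a n m p : cntF a n p <= cntF a (n + m) p.
Proof. rewrite cntF_app. lia. Qed.

Lemma fold_seq_S g a t : fold_right Nat.add 0 (map g (seq a (S t))) = g a + fold_right Nat.add 0 (map g (seq (S a) t)).
Proof. reflexivity. Qed.

Lemma count_upto_bound (Sp : nat -> Prop) K p : (forall x, Sp x -> K < x -> p x = true) ->
  forall t, count_upto Sp t <= K + cntF 1 t p.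
Proof.
  intros H t. unfold count_upto.
  assert (G : forall t a, 1 <= a -> fold_right Nat.add 0
     (map (fun n => if excluded_middle_informative (Sp n) then 1 else 0) (seq a t)) <= (K + 1 - a) + cntF a t p).
  { clear t. induction t as [|t IH]; intros a Ha; [simpl; lia|].
    rewrite fold_seq_S. unfold cntF. simpl. specialize (IH (S a) ltac:(lia)). unfold cntF in IH.
    destruct (excluded_middle_informative (Sp a)) as [Hs|Hs].
    - destruct (Nat.le_gt_cases a K).
      + destruct (p a); simpl; lia.
      + rewrite (H a Hs) by lia. simpl. lia.
    - destruct (p a); simpl; lia. }
  specialize (G t 1 (le_n 1)). lia.
Qed.

Lemma prod_bound (u : nat -> nat) L : forall N0, 1 <= N0 -> (forall n, N0 <= n < N0 + L -> 1 <= u n <= n) ->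
  prodl (map (fun n => u n - 1) (seq N0 L)) * (N0 + L - 1) <= prodl (map u (seq N0 L)) * (N0 - 1).
Proof.
  induction L as [|L IH]; intros N0 H1 Hu; simpl; [lia|].
  specialize (IH (S N0) ltac:(lia) ltac:(intros; apply Hu; lia)).
  destruct (Hu N0 ltac:(lia)) as [Hu1 Hu2].
  set (X := prodl (map (fun n => u n - 1) (seq (S N0) L))) in *.
  set (Y := prodl (map u (seq (S N0) L))) in *.
  destruct (u N0) as [|w]; [lia|]. destruct N0 as [|N']; [lia|].
  replace (S w - 1) with w by lia. replace (S N' - 1) with N' by lia.
  replace (S N' + S L - 1) with (S N' + L) by lia.
  replace (S (S N') + L - 1) with (S N' + L) in IH by lia.
  (* w*X*(N'+1+L) <= w*Y*(N'+1) <= (w+1)*Y*N' *)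
  assert (A : w * X * (S N' + L) <= w * (Y * S N')) by (rewrite <- Nat.mul_assoc; apply Nat.mul_le_mono_l; lia).
  nia.
Qed.

Definition maxl (l : list nat) := fold_right Nat.max 0 l.
Lemma maxl_ge x l : In x l -> x <= maxl l.
Proof. induction l; simpl; [intros []|]. intros [->|H]; [lia|]. specialize (IHl H). lia. Qed.

Lemma exceptions {V} (adj : V -> V -> Prop) (F : nat -> list V) (f : V -> nat)
  (Hrul : forall n, ruling adj (F n)) : forall Js, exists K, forall n, In n Js -> forall v, K < f v ->
  exists w, In w (F n) /\ adj v w /\ f w < f v.
Proof.
  assert (One : forall n, exists K, forall v, K < f v -> exists w, In w (F n) /\ adj v w /\ f w < f v).
  { intros n. destruct (Hrul n) as [_ [Lx HL]].
    exists (Nat.max (maxl (map f (F n))) (maxl (map f Lx))). intros v Hv.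
    destruct (classic (exists w, In w (F n) /\ adj v w)) as [[w [Hw Ha]]|Hno].
    - exists w. repeat split; auto. pose proof (maxl_ge (f w) (map f (F n)) (in_map f _ _ Hw)). lia.
    - exfalso. destruct (classic (In v (F n))) as [Hi|Hi].
      + pose proof (maxl_ge (f v) (map f (F n)) (in_map f _ _ Hi)). lia.
      + pose proof (maxl_ge (f v) (map f Lx) (in_map f _ _ (HL v Hi Hno))). lia. }
  induction Js as [|n Js IH].
  - exists 0. intros n [].
  - destruct IH as [K1 HK1]. destruct (One n) as [K2 HK2]. exists (Nat.max K1 K2).
    intros m [<-|Hm] v Hv; [apply HK2 | apply HK1]; auto; lia.
Qed.

Definition bitc (m n : nat) : bool := bit m n.

Lemma core {V} (adj : V -> V -> Prop) (F : nat -> list V) (f : V -> nat) (b : bool)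
  (Hinj : forall u v, f u = f v -> u = v)
  (Hb : forall u v, adj u v -> edge_color bitc (f u) (f v) = b)
  (Hrul : forall n, ruling adj (F n))
  (Hdisj : forall m n, m <> n -> forall v, In v (F m) -> ~ In v (F n))
  (N0 : nat) (HN0 : 2 <= N0) (Hsz : forall n, N0 <= n -> 2 ^ length (F n) <= n) (L : nat) :
  exists K', forall t, count_upto (image f) t * (N0 + L - 1) <= K' * (N0 + L - 1) + t * (N0 - 1).
Proof.
  set (Js := seq N0 L).
  destruct (exceptions adj F f Hrul Js) as [K HK].
  set (P := S (maxl (concat (map (fun n => map f (F n)) Js)))).
  assert (HP : forall n w, In n Js -> In w (F n) -> f w < P).
  { intros n w Hn Hw. unfold P. apply Nat.lt_succ_r, maxl_ge. apply in_concat.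
    exists (map f (F n)). split; [apply in_map_iff; eauto | apply in_map; auto]. }
  set (blk := fun s => match find (fun n => existsb (Nat.eqb s) (map f (F n))) Js with Some n => n | None => 0 end).
  assert (Hblk1 : forall n w, In n Js -> In w (F n) -> blk (f w) = n).
  { intros n w Hn Hw. unfold blk.
    destruct (find (fun n0 => existsb (Nat.eqb (f w)) (map f (F n0))) Js) as [n'|] eqn:E.
    - apply find_some in E as [Hn' Ex]. apply existsb_exists in Ex as [s [Hs Hs']].
      apply Nat.eqb_eq in Hs'. subst s. apply in_map_iff in Hs as [w' [Hw' Hw'']].
      apply Hinj in Hw'. subst w'.
      destruct (Nat.eq_dec n' n) as [|Hne]; auto. exfalso. exact (Hdisj _ _ Hne w Hw'' Hw).
    - exfalso. pose proof (find_none _ _ E n Hn) as X. simpl in X.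
      assert (existsb (Nat.eqb (f w)) (map f (F n)) = true).
      { apply existsb_exists. exists (f w). split; [apply in_map; auto | apply Nat.eqb_refl]. }
      congruence. }
  assert (Hblk2 : forall n s, In n Js -> blk s = n -> In s (map f (F n))).
  { intros n s Hn Hs. unfold blk in Hs.
    destruct (find (fun n0 => existsb (Nat.eqb s) (map f (F n0))) Js) as [n'|] eqn:E.
    - subst n'. apply find_some in E as [_ Ex]. apply existsb_exists in Ex as [s' [Hs1 Hs2]].
      apply Nat.eqb_eq in Hs2. subst; auto.
    - subst n. unfold Js in Hn. apply in_seq in Hn. lia. }
  set (p := pr blk b P Js).
  assert (Hp : forall x, image f x -> K < x -> p x = true).
  { intros x [v <-] Hv. unfold p, pr. apply forallb_forall. intros n Hn.
    destruct (HK n Hn v Hv) as [w [Hw [Ha Hlt]]].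
    apply existsb_exists. exists (f w). split.
    - apply in_seq. specialize (HP n w Hn Hw). lia.
    - rewrite (Hblk1 n w Hn Hw), Nat.eqb_refl. simpl.
      specialize (Hb v w Ha). unfold edge_color in Hb.
      replace (f v <? f w) with false in Hb by (symmetry; apply Nat.ltb_ge; lia).
      unfold bitc in Hb. rewrite Hb. destruct b; auto. }
  set (a := cntF 0 (2 ^ P) p).
  assert (Hper : forall q y, y < 2 ^ P -> p (q * 2 ^ P + y) = p y).
  { intros q y Hy. unfold p, pr. apply forallb_ext_in. intros j _. apply existsb_ext_in.
    intros s Hs. apply in_seq in Hs. rewrite bit_per by lia. auto. }
  assert (Hcnt : forall t, count_upto (image f) t <= K + (t / 2 ^ P + 1) * a).
  { intros t. eapply Nat.le_trans. apply (count_upto_bound _ K p Hp t).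
    apply Nat.add_le_mono_l.
    set (q := t / 2 ^ P).
    assert (Hq : S t <= (q + 1) * 2 ^ P).
    { pose proof (Nat.div_mod t (2 ^ P) ltac:(apply Nat.pow_nonzero; lia)).
      pose proof (Nat.mod_upper_bound t (2 ^ P) ltac:(apply Nat.pow_nonzero; lia)). fold q in H.
      clearbody q. revert H H0. generalize (t mod 2 ^ P). generalize (2 ^ P). intros. nia. }
    transitivity (cntF 0 (S t) p).
    { change (S t) with (1 + t). rewrite cntF_app. simpl (0 + 1). lia. }
    transitivity (cntF 0 ((q + 1) * 2 ^ P) p).
    { replace ((q + 1) * 2 ^ P) with (S t + ((q + 1) * 2 ^ P - S t)) by lia. apply cntF_mono. }
    rewrite cntF_periodic by auto. lia. }
  pose proof (count_formula blk b P Js (seq_NoDup L N0)) as CF. fold p a in CF.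
  set (u := fun n => 2 ^ kk blk P n).
  assert (Hu : forall n, N0 <= n < N0 + L -> 1 <= u n <= n).
  { intros n Hn. split; [apply pow2_pos|]. unfold u.
    assert (In n Js) by (apply in_seq; lia).
    transitivity (2 ^ length (F n)); [|apply Hsz; lia].
    apply Nat.pow_le_mono_r; [lia|]. unfold kk.
    rewrite <- (length_map f (F n)). apply NoDup_incl_length.
    - apply NoDup_filter, seq_NoDup.
    - intros s Hs. apply filter_In in Hs as [_ Hs]. apply Nat.eqb_eq in Hs. apply Hblk2; auto. }
  pose proof (prod_bound u L N0 ltac:(lia) Hu) as PB.
  fold Js in PB. unfold u in PB.
  set (Pi1 := prodl (map (fun j => 2 ^ kk blk P j) Js)) in *.
  set (Pi2 := prodl (map (fun j => 2 ^ kk blk P j - 1) Js)) in *.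
  assert (Pi1pos : 0 < Pi1).
  { unfold Pi1. generalize Js. intros l. induction l as [|j l IH]; simpl; [lia|]. pose proof (pow2_pos (kk blk P j)). nia. }
  set (M := N0 + L - 1) in *.
  assert (HaM : a * M <= 2 ^ P * (N0 - 1)).
  { apply (Nat.mul_le_mono_pos_r _ _ Pi1 Pi1pos).
    transitivity (2 ^ P * (Pi2 * M)); [rewrite Nat.mul_assoc, <- CF; nia|].
    transitivity (2 ^ P * (Pi1 * (N0 - 1))); [apply Nat.mul_le_mono_l; lia | lia]. }
  exists (K + a). intros t. specialize (Hcnt t).
  pose proof (Nat.Div0.mul_div_le t (2 ^ P)) as Hdiv.
  set (q := t / 2 ^ P) in *.
  transitivity ((K + (q + 1) * a) * M); [apply Nat.mul_le_mono_r; auto|].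
  assert (q * a * M <= t * (N0 - 1)).
  { transitivity (q * (2 ^ P * (N0 - 1))); [rewrite <- Nat.mul_assoc; apply Nat.mul_le_mono_l; auto|].
    rewrite Nat.mul_assoc. apply Nat.mul_le_mono_r. lia. }
  nia.
Qed.

Local Open Scope R_scope.

Lemma pow_bound (k n : nat) : (2 <= n)%nat -> INR k <= ln (INR n) / ln 2 -> (2 ^ k <= n)%nat.
Proof.
  intros Hn Hk. pose proof ln_lt_2 as L2.
  assert (Hl : 0 < ln 2) by (apply Rlt_trans with (/2); lra).
  assert (H1 : INR k * ln 2 <= ln (INR n)).
  { apply Rmult_le_compat_r with (r := ln 2) in Hk; [|lra].
    unfold Rdiv in Hk. rewrite Rmult_assoc, Rinv_l in Hk by lra. lra. }
  rewrite <- ln_pow in H1 by lra.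
  destruct (Nat.le_gt_cases (2 ^ k) n) as [|Hc]; auto. exfalso.
  apply lt_INR in Hc. rewrite pow_INR in Hc. replace (INR 2) with 2 in Hc by (simpl; lra).
  assert (0 < INR n) by (apply lt_0_INR; lia).
  pose proof (ln_increasing _ _ H Hc). lra.
Qed.

Theorem mainTheorem9 (V : Type) (adj : V -> V -> Prop)
  (Hg : simple_graph adj) (Hinf : countably_infinite V)
  (F : nat -> list V)
  (Hrul : forall n, ruling adj (F n))
  (Hdisj : forall m n, m <> n -> forall v, In v (F m) -> ~ In v (F n))
  (Hsize : exists N : nat, forall n : nat, (N <= n)%nat ->
             INR (length (F n)) <= ln (INR n) / ln 2) :
  ~ ramsey_dense adj /\
  exists c : nat -> nat -> bool, forall f : V -> nat,
    mono_copy adj c f -> upper_density (image f) = Finite 0.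
Proof.
  destruct Hsize as [N HN].
  set (N0 := Nat.max N 2).
  assert (Hsz : forall n, (N0 <= n)%nat -> (2 ^ length (F n) <= n)%nat).
  { intros n Hn. apply pow_bound; [lia|]. apply HN. lia. }
  assert (Hmain : forall f, mono_copy adj bitc f -> upper_density (image f) = Finite 0).
  { intros f [Hinj [b Hb]]. unfold upper_density.
    apply is_LimSup_seq_unique, is_lim_LimSup_seq, is_lim_seq_spec.
    intros eps. pose proof (cond_pos eps) as He.
    destruct (INR_archimed (eps / 2) (INR (N0 - 1)) ltac:(lra)) as [n Hn].
    destruct (core adj F f b Hinj Hb Hrul Hdisj N0 ltac:(lia) Hsz (S n)) as [K' HK'].
    destruct (INR_archimed (eps / 2) (INR K') ltac:(lra)) as [T HT].
    exists (S T). intros t Ht.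
    specialize (HK' t).
    set (M := (N0 + S n - 1)%nat) in *.
    set (cnt := count_upto (image f) t) in *.
    assert (HM : INR n <= INR M) by (apply le_INR; lia).
    assert (HT' : INR T <= INR t) by (apply le_INR; lia).
    assert (Ht0 : 0 < INR t) by (apply lt_0_INR; lia).
    assert (HM0 : 0 < INR M) by (apply lt_0_INR; lia).
    apply le_INR in HK'. rewrite !plus_INR, !mult_INR in HK'.
    assert (Hc0 : 0 <= INR cnt) by apply pos_INR.
    assert (Hk : INR K' < eps / 2 * INR t) by nra.
    assert (Hn0 : INR (N0 - 1) < eps / 2 * INR M) by nra.
    assert (INR cnt * INR M < eps * INR t * INR M) by nra.
    assert (INR cnt < eps * INR t) by nra.
    rewrite Rminus_0_r, Rabs_pos_eq.
    - apply Rmult_lt_reg_r with (INR t); auto. unfold Rdiv. rewrite Rmult_assoc, Rinv_l by lra. lra.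
    - apply Rdiv_le_0_compat; lra. }
  split.
  - intros H. destruct (H bitc) as [f [Hf Hpos]]. rewrite (Hmain f Hf) in Hpos. simpl in Hpos. lra.
  - exists bitc. exact Hmain.
Qed.
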